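(* Let $k\ge 0$. (1) There exists a unique $\alpha\in(0,1)$ with $P_k(\alpha)=0$; equivalently, there exists a unique $\alpha'>1$ with $P_k(\alpha')=0$, namely $\alpha'=1/\alpha$. (2) If $\beta\in\mathbb{C}$ is a root of $P_k$, then $\beta=\alpha$, $\beta=\alpha'$, or $|\beta|=1$.
   Context: For $k\ge 0$, $P_{k}(q)=1+\sum_{l=1}^{k+1} q^{4l-4}(q^4-q^3-q^2-q)$, i.e. $P_0=q^4-q^3-q^2-q+1$, $P_1=q^8-q^7-q^6-q^5+q^4-q^3-q^2-q+1$, $P_k=(q^4+1)P_{k-1}-q^4P_{k-2}$. One has $P_k(q)=q^{2k+2}\,q_k(q+q^{-1}+2)$, where $q_0(x)=x^2-5x+3$, $q_1(x)=(x^3-8x^2+17x-5)(x-1)$, $q_k=(x^2-4x+2)q_{k-1}-q_{k-2}$; all roots of $q_k$ are real (it is, up to a factor, the characteristic polynomial of a real symmetric matrix). *)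

(* Defs.v *)
From HB Require Import structures.
From mathcomp Require Import all_boot all_order all_algebra.
Set Implicit Arguments. Unset Strict Implicit. Unset Printing Implicit Defensive.
Import Order.TTheory GRing.Theory Num.Theory.
Local Open Scope ring_scope.

Definition P (R : nzRingType) (k : nat) : {poly R} :=
  1 + \sum_(1 <= l < k.+2) 'X^(4 * l - 4) * ('X^4 - 'X^3 - 'X^2 - 'X).

(* Main.v *)
Require Import Defs.
From HB Require Import structures.
From mathcomp Require Import all_boot all_order all_algebra.
Import Order.TTheory GRing.Theory Num.Theory.
Local Open Scope ring_scope.
From Stdlib Require Import Ring.

Section Main.
Variable C : numClosedFieldType.
Definition cadd (a b : C) : C := a + b.
Definition cmul (a b : C) : C := a * b.
Definition copp (a : C) : C := - a.
Definition c0 : C := 0.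
Definition c1 : C := 1.
Definition cexp (a : C) n : C := a ^+ n.
Lemma CRT : @ring_theory C c0 c1 cadd cmul (fun x y => cadd x (copp y)) copp eq.
Proof. rewrite /cadd /cmul /copp /c0 /c1; split=> //; [exact: add0r|exact: addrC|exact: addrA|exact: mul1r|exact: mulrC|exact: mulrA|exact: mulrDl|exact: subrr]. Qed.
Add Ring CRing : CRT.
Lemma addE (a b : C) : a + b = cadd a b. Proof. by []. Qed.
Lemma mulE (a b : C) : a * b = cmul a b. Proof. by []. Qed.
Lemma oppE (a : C) : - a = copp a. Proof. by []. Qed.
Lemma zeroE : 0 = c0 :> C. Proof. by []. Qed.
Lemma oneE : 1 = c1 :> C. Proof. by []. Qed.
Lemma expE (a : C) n : a ^+ n = cexp a n. Proof. by []. Qed.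
Ltac cring := rewrite ?addE ?mulE ?oppE ?zeroE ?oneE ?expE;
  match goal with |- ?a = ?b => change (@eq (Num.ClosedField.sort C) a b) end; ring.

Fixpoint u (s : C) (m : nat) : C :=
  match m with
  | 0%N => 1
  | S m1 => match m1 with 0%N => s | S m2 => s * u s m1 - u s m2 end
  end.
Lemma uSS s m : u s m.+2 = s * u s m.+1 - u s m. Proof. by []. Qed.
Lemma u0 s : u s 0 = 1. Proof. by []. Qed.
Lemma u1 s : u s 1 = s. Proof. by []. Qed.
Arguments u : simpl never.

Lemma CD s t m : u s m.+1 * u t m - u s m * u t m.+1
  = (s - t) * \sum_(j < m.+1) u s j * u t j.
Proof.
elim: m => [|m IH]; first by rewrite big_ord1 /= !u0 !u1; cring.
rewrite big_ord_recr /= !uSS [RHS]mulrDr -IH; cring.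
Qed.

Definition pp s m := u s m.+2 - u s m.+1.
Definition ff s m := s * pp s m - (u s m.+1 + u s m.+1).

Lemma CDf s t m : ff s m * pp t m - pp s m * ff t m
  = (s - t) * (pp s m * pp t m + (\sum_(j < m.+2) u s j * u t j
                                  + \sum_(j < m.+2) u s j * u t j)).
Proof.
rewrite /ff /pp big_ord_recr /= !uSS.
set S := \sum_(i < m.+1) _.
have H := CD s t m; rewrite -/S in H.
transitivity ((s - t) * ((u s m.+1 - s * u s m.+1 + u s m) * (u t m.+1 - t * u t m.+1 + u t m)
   + (u s m.+1 * u t m.+1 + u s m.+1 * u t m.+1)) + ((s-t) * S + (s - t) * S)); last by cring.
rewrite -H; cring.
Qed.

Ltac normx := rewrite ?addSn ?addnS ?add0n ?addn0 ?exprS ?exprD ?expr0.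

Lemma uval x s m : x * s = x ^+ 2 + 1 ->
  x ^+ m * (x ^+ 2 - 1) * u s m = x ^+ (m + m).+2 - 1
  /\ x ^+ m.+1 * (x ^+ 2 - 1) * u s m.+1 = x ^+ (m.+1 + m.+1).+2 - 1.
Proof.
move=> hs; elim: m => [|m [IH0 IH1]].
  rewrite !u0 !u1; split; first by normx; cring.
  transitivity ((x ^+ 2 - 1) * (x * s)); first by normx; cring.
  rewrite hs; normx; cring.
split=> //.
transitivity ((x * s) * (x ^+ m.+1 * (x ^+ 2 - 1) * u s m.+1)
   - x ^+ 2 * (x ^+ m * (x ^+ 2 - 1) * u s m)).
  rewrite uSS; set y := x ^+ m; set a := u s m; set b := u s m.+1.
  rewrite -/y; normx; rewrite -/y; cring.
rewrite IH0 IH1 hs; set y := x ^+ (m + m); normx; rewrite -/y; cring.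
Qed.

Definition W (x : C) := x ^+ 4 - x ^+ 3 - x ^+ 2 - x.
Definition Pv k (x : C) := 1 + \sum_(i < k.+1) x ^+ (4 * i) * W x.

Lemma P_eval k x : (P C k).[x] = Pv k x.
Proof.
rewrite /P /Pv hornerD hornerC horner_sum big_add1 /= big_mkord; congr (_ + _).
apply: eq_bigr => i _; rewrite hornerM hornerXn mulnS addKn /W.
by rewrite !hornerE.
Qed.

Lemma Qid k x : (x ^+ 4 - 1) * Pv k x = x ^+ (4 * k.+1) * W x + (x ^+ 3 + x ^+ 2 + x - 1).
Proof.
rewrite /Pv /W; elim: k => [|k IH].
  rewrite big_ord1 /= muln0 muln1; normx; cring.
rewrite big_ord_recr /= addrA mulrDr IH.
rewrite [(4 * k.+2)%N]mulnS exprD.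
set y := x ^+ (4 * k.+1); normx; rewrite -/y; cring.
Qed.

Lemma keyid k (x s : C) : x * s = x ^+ 2 + 1 ->
  (x ^+ 2 - 1) * x ^+ (2 * k).+3 * ff s (2 * k) = (x ^+ 4 - 1) * Pv k x.
Proof.
move=> hs; have [A B] := uval x s (2 * k).+1 hs.
rewrite Qid.
have e : (4 * k.+1 = (2 * k + 2 * k) + 4)%N by rewrite mulnS -mulnDl addnC.
rewrite e.
transitivity ((x * s) * (x ^+ (2 * k).+2 * (x ^+ 2 - 1) * u s (2 * k).+2)
  - (x * s) * x * (x ^+ (2 * k).+1 * (x ^+ 2 - 1) * u s (2 * k).+1)
  - x ^+ 2 * (x ^+ (2 * k).+1 * (x ^+ 2 - 1) * u s (2 * k).+1)
  - x ^+ 2 * (x ^+ (2 * k).+1 * (x ^+ 2 - 1) * u s (2 * k).+1)).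
  rewrite /ff /pp; set y := x ^+ (2 * k); normx; rewrite -/y; cring.
rewrite A B hs /W; set y := x ^+ (2 * k); normx; rewrite -/y; cring.
Qed.

Lemma uconj s m : u s^* m = (u s m)^*.
Proof.
suff : u s^* m = (u s m)^* /\ u s^* m.+1 = (u s m.+1)^* by case.
elim: m => [|m [IH0 IH1]]; first by rewrite !u0 !u1 rmorph1.
by split=> //; rewrite !uSS rmorphB rmorphM IH0 IH1.
Qed.

Lemma ppconj s m : pp s^* m = (pp s m)^*.
Proof. by rewrite /pp rmorphB !uconj. Qed.

Lemma ffconj s m : ff s^* m = (ff s m)^*.
Proof. by rewrite /ff ppconj !uconj !(rmorphB, rmorphD, rmorphM). Qed.

Lemma Kpos (a : C) m (F : 'I_m.+2 -> C) : 0 <= a -> (forall j, 0 <= F j) -> F ord0 = 1 ->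
  0 < a + (\sum_(j < m.+2) F j + \sum_(j < m.+2) F j).
Proof.
move=> ha hF h0.
have hS : 1 <= \sum_(j < m.+2) F j.
  by rewrite big_ord_recl h0 lerDl; apply: sumr_ge0 => i _.
apply: (lt_le_trans _ (lerD ha (lerD hS hS))); rewrite add0r.
by apply: (lt_le_trans ltr01); rewrite lerDl ler01.
Qed.

Lemma s_real s m : ff s m = 0 -> s^* = s.
Proof.
move=> h0; have := CDf s s^* m; rewrite ffconj h0 rmorph0 mul0r mulr0 subrr.
move/esym/eqP; rewrite mulf_eq0 => /orP[|]; first by rewrite subr_eq0 => /eqP/esym.
move=> /eqP hK; exfalso.
have : 0 < pp s m * pp s^* m + (\sum_(j < m.+2) u s j * u s^* j + \sum_(j < m.+2) u s j * u s^* j).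
  apply: Kpos; first by rewrite ppconj mul_conjC_ge0.
    by move=> j; rewrite uconj mul_conjC_ge0.
  by rewrite /= uconj u0 rmorph1 mulr1.
by rewrite hK ltxx.
Qed.

Lemma upos s : s \is Num.real -> 2 <= s -> forall j, 1 <= u s j /\ u s j <= u s j.+1.
Proof.
move=> sR s2 j; elim: j => [|j [IH0 IH1]].
  rewrite u0 u1; split=> //; apply: le_trans s2; by rewrite ler1n.
split; first exact: le_trans IH1.
rewrite uSS.
have u1ge0 : 0 <= u s j.+1 by apply: le_trans (le_trans ler01 IH0) IH1.
have : 2 * u s j.+1 <= s * u s j.+1 by rewrite ler_wpM2r.
move=> H; apply: le_trans _ (lerB H (lexx (u s j))).
by rewrite mulr_natl mulr2n -addrA lerDl subr_ge0.
Qed.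

Lemma recip_id (x y : C) : x != 0 -> y != 0 -> x + x^-1 = y + y^-1 ->
  (x - y) * (x * y - 1) = 0.
Proof.
move=> x0 y0 h.
transitivity (x * x * y + y * (x * x^-1) - x * y * y - x * (y * y^-1)).
  by rewrite !mulfV //; cring.
transitivity (x * y * ((x + x^-1) - (y + y^-1))); first by cring.
by rewrite h subrr mulr0.
Qed.

Lemma s_unique s1 s2 m : s1 \is Num.real -> s2 \is Num.real -> 2 <= s1 -> 2 <= s2 ->
  ff s1 m = 0 -> ff s2 m = 0 -> s1 = s2.
Proof.
move=> r1 r2 h1 h2 f1 f2; have := CDf s1 s2 m; rewrite f1 f2 mul0r mulr0 subrr.
move/esym/eqP; rewrite mulf_eq0 => /orP[|]; first by rewrite subr_eq0 => /eqP.
move=> /eqP hK; exfalso.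
have : 0 < pp s1 m * pp s2 m + (\sum_(j < m.+2) u s1 j * u s2 j + \sum_(j < m.+2) u s1 j * u s2 j).
  apply: Kpos.
  - by apply: mulr_ge0; rewrite /pp subr_ge0; [case: (upos s1 r1 h1 m.+1)|case: (upos s2 r2 h2 m.+1)].
  - move=> j; apply: mulr_ge0.
      by case: (upos s1 r1 h1 j) => H _; apply: le_trans H.
    by case: (upos s2 r2 h2 j) => H _; apply: le_trans H.
  - by rewrite /= !u0 mulr1.
by rewrite hK ltxx.
Qed.

Lemma ivt (p : {poly C}) : map_poly Num.conj p = p -> forall a b : C,
  a \is Num.real -> b \is Num.real -> a < b -> p.[a] * p.[b] < 0 ->
  exists2 x, a < x < b & root p x.
Proof.
have [n] := ubnP (size p); elim: n p => // n IH p hsz hp a b aR bR ab hab.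
have pn0 : p != 0 by apply: contraTneq hab => ->; rewrite !horner0 mul0r ltxx.
have [hs1|hs1] := eqVneq (size p) 1%N.
  exfalso; have pc := size1_polyC (eq_leq hs1).
  have hc : (p`_0)^* = p`_0 by rewrite -{2}hp coef_map.
  move: hab; rewrite pc !hornerC -{2}hc.
  by move/(le_lt_trans (mul_conjC_ge0 _)); rewrite ltxx.
have /closed_rootP [z rz] := hs1.
have /factor_theorem [q pq] := rz.
have qn0 : q != 0 by apply: contraNneq pn0 => q0; rewrite pq q0 mul0r.
have [zR|zNR] := boolP (z \is Num.real).
  have zc : z^* = z by apply: conj_Creal.
  have hq : map_poly Num.conj q = q.
    apply: (mulIf (negbT (polyXsubC_eq0 z))).
    by rewrite -{1}zc -map_polyXsubC -rmorphM -pq; exact: hp.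
  have szq : (size q < n)%N.
    by move: hsz; rewrite pq size_Mmonic ?monicXsubC // size_XsubC addn2.
  have hpq : p.[a] * p.[b] = (q.[a] * q.[b]) * ((a - z) * (b - z)).
    by rewrite pq !hornerM !hornerXsubC mulrACA.
  have key : 0 < (a - z) * (b - z) -> exists2 x, a < x < b & root p x.
    move=> hpos; rewrite hpq pmulr_llt0 // in hab.
    have [x hx rx] := IH q szq hq a b aR bR ab hab.
    by exists x => //; rewrite pq rootM rx.
  case: (real_ltgtP zR aR) => [za|az|eza].
  - by apply: key; apply: mulr_gt0; rewrite subr_gt0 //; apply: lt_trans ab.
  - case: (real_ltgtP zR bR) => [zb|bz|ezb].
    + by exists z => //; rewrite az zb.
    + by apply: key; rewrite nmulr_rgt0 subr_lt0 //; apply: lt_trans ab bz.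
    + by move: hab; rewrite -ezb (rootP rz) mulr0 ltxx.
  - by move: hab; rewrite -eza (rootP rz) mul0r ltxx.
have zc : z^* != z by rewrite -CrealE.
have rz' : root p z^* by rewrite /root -{1}hp horner_map (rootP rz) rmorph0.
have rq : root q z^*.
  by move: rz'; rewrite pq rootM root_XsubC (negbTE zc) orbF.
have /factor_theorem [q2 qq2] := rq.
set r := ('X - (z^*)%:P) * ('X - z%:P).
have p_eq : p = q2 * r by rewrite pq qq2 /r mulrA.
have rn0 : r != 0 by rewrite mulf_neq0 // polyXsubC_eq0.
have q2n0 : q2 != 0 by apply: contraNneq pn0 => q0; rewrite p_eq q0 mul0r.
have hr : map_poly Num.conj r = r.
  by rewrite /r rmorphM /= !map_polyXsubC /= conjCK mulrC.
have hq2 : map_poly Num.conj q2 = q2.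
  by apply: (mulIf rn0); rewrite -{1}hr -rmorphM -p_eq; exact: hp.
have szq : (size q2 < n)%N.
  move: hsz; rewrite p_eq /r mulrA size_Mmonic ?monicXsubC ?mulf_neq0 ?polyXsubC_eq0 //.
  by rewrite size_Mmonic ?monicXsubC // !size_XsubC !addn2 /= ltnS => h; apply: ltnW.
have rpos x : x \is Num.real -> 0 < r.[x].
  move=> xR; rewrite /r hornerM !hornerXsubC.
  have -> : x - z^* = (x - z)^* by rewrite rmorphB /= (conj_Creal xR).
  rewrite mulrC mul_conjC_gt0 subr_eq0.
  by apply: contraNneq zNR => <-.
have hpq : p.[a] * p.[b] = (q2.[a] * q2.[b]) * (r.[a] * r.[b]).
  by rewrite p_eq !hornerM mulrACA.
rewrite hpq pmulr_llt0 ?mulr_gt0 ?rpos // in hab.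
have [x hx rx] := IH q2 szq hq2 a b aR bR ab hab.
by exists x => //; rewrite p_eq rootM rx.
Qed.

Lemma W_pos x : x < 0 -> 0 < W x.
Proof.
move=> xn; have xR : x \is Num.real by apply: ltr0_real.
have -> : W x = (x * x) * (x * x) + x * x + (- x) * `|x + 1| ^+ 2.
  rewrite real_normK ?rpredD ?rpred1 // /W; normx; cring.
have xx : 0 < x * x by rewrite -mulrNN mulr_gt0 // oppr_gt0.
apply: (lt_le_trans (mulr_gt0 xx xx)); rewrite -addrA lerDl.
apply: addr_ge0; first exact: ltW xx.
by apply: mulr_ge0; [rewrite oppr_ge0 ltW | apply: exprn_ge0].
Qed.

Lemma Pv_neg k x : x < 0 -> 0 < Pv k x.
Proof.
move=> xn; have xR : x \is Num.real by apply: ltr0_real.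
apply: (lt_le_trans ltr01); rewrite /Pv lerDl; apply: sumr_ge0 => i _.
apply: mulr_ge0; last exact: ltW (W_pos x xn).
by apply: real_exprn_even_ge0 => //; rewrite oddM.
Qed.

Lemma Pv0 k : Pv k 0 = 1.
Proof.
have W0 : W 0 = 0 by rewrite /W; normx; cring.
by rewrite /Pv W0 big1 ?addr0 // => i _; rewrite mulr0.
Qed.

Lemma Pv1 k : Pv k 1 < 0.
Proof.
rewrite /Pv; under eq_bigr do rewrite expr1n mul1r.
rewrite sumr_const card_ord mulrS addrA.
have hw : 1 + W 1 = - 1 by rewrite /W !expr1n; cring.
rewrite hw; apply: (le_lt_trans (y := - 1)); last by rewrite ltrN10.
rewrite gerDl; apply: mulrn_wle0.
rewrite -(lerD2l 1) hw addr0; apply: (le_trans _ ler01); exact: lerN10.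
Qed.

Lemma P_real k : map_poly Num.conj (P C k) = P C k.
Proof.
rewrite /P rmorphD rmorph1 rmorph_sum /=; congr (_ + _).
apply: eq_bigr => i _.
by rewrite rmorphM rmorphXn /= !rmorphB rmorphXn /= !rmorphXn /= map_polyX.
Qed.

Lemma root_ff k (x : C) : x != 0 -> x ^+ 2 != 1 -> root (P C k) x ->
  ff (x + x^-1) (2 * k) = 0.
Proof.
move=> x0 x2 /rootP; rewrite P_eval => hP.
have hs : x * (x + x^-1) = x ^+ 2 + 1 by rewrite mulrDr mulfV // expr2.
have := keyid k x _ hs; rewrite hP mulr0 => /eqP.
rewrite mulf_eq0 => /orP[H|/eqP //]; exfalso; move: H.
by rewrite mulf_eq0 subr_eq0 (negbTE x2) /= expf_eq0 (negbTE x0) andbF.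
Qed.

Lemma ff_root k (x : C) : x != 0 -> x ^+ 4 != 1 -> ff (x + x^-1) (2 * k) = 0 ->
  root (P C k) x.
Proof.
move=> x0 x4 hf; apply/rootP; rewrite P_eval.
have hs : x * (x + x^-1) = x ^+ 2 + 1 by rewrite mulrDr mulfV // expr2.
have := keyid k x _ hs; rewrite hf mulr0 => /esym/eqP.
by rewrite mulf_eq0 subr_eq0 (negbTE x4) /= => /eqP.
Qed.

Lemma s_ge2 (x : C) : 0 < x -> 2 <= x + x^-1.
Proof.
move=> x0; have xn0 : x != 0 by rewrite gt_eqF.
have xR : x \is Num.real by apply: gtr0_real.
rewrite -subr_ge0.
have -> : x + x^-1 - 2 = `|x - 1| ^+ 2 * x^-1.
  rewrite real_normK ?rpredB ?rpred1 //.
  transitivity (x * (x * x^-1) - (x * x^-1) - (x * x^-1) + x^-1); first by rewrite mulfV // mulr2n; cring.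
  normx; cring.
by apply: mulr_ge0; [apply: exprn_ge0 | rewrite invr_ge0 ltW].
Qed.

Lemma sx_real (x : C) : x \is Num.real -> x + x^-1 \is Num.real.
Proof. by move=> xR; rewrite rpredD ?rpredV. Qed.

Lemma unit_facts (x : C) : 0 < x -> x < 1 -> [/\ x != 0, x ^+ 2 != 1 & x ^+ 4 != 1].
Proof.
move=> x0 x1; have x0' : 0 <= x by apply: ltW.
have x2 : x ^+ 2 < 1 by rewrite expr2 mulr_ilt1.
have x4 : x ^+ 4 < 1.
  have -> : x ^+ 4 = x ^+ 2 * x ^+ 2 by rewrite -exprD.
  by rewrite mulr_ilt1 ?exprn_ge0.
by split; [rewrite (gt_eqF x0) | rewrite (lt_eqF x2) | rewrite (lt_eqF x4)].
Qed.

Lemma root_inv k (x : C) : x != 0 -> x ^+ 2 != 1 -> x ^+ 4 != 1 ->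
  root (P C k) x -> root (P C k) x^-1.
Proof.
move=> x0 x2 x4 rx; apply: ff_root.
- by rewrite invr_eq0.
- by rewrite exprVn invr_eq1.
by rewrite invrK addrC; apply: root_ff.
Qed.

Lemma main k : exists a : C,
    [/\ 0 < a < 1, root (P C k) a,
        (forall b : C, 0 < b < 1 -> root (P C k) b -> b = a),
        (forall b : C, 1 < b -> (root (P C k) b <-> b = a^-1))
      & (forall beta : C, root (P C k) beta ->
           [\/ beta = a, beta = a^-1 | `|beta| = 1])].
Proof.
have hsgn : (P C k).[0] * (P C k).[1] < 0 by rewrite !P_eval Pv0 mul1r Pv1.
have [a /andP[a0 a1] ra] := @ivt _ (P_real k) 0 1 (real0 _) (real1 _) ltr01 hsgn.
have [an0 a2 a4] := unit_facts _ a0 a1.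
have aR : a \is Num.real by apply: gtr0_real.
have fa := root_ff _ _ an0 a2 ra.
have U : forall b : C, 0 < b < 1 -> root (P C k) b -> b = a.
  move=> b /andP[b0 b1] rb; have [bn0 b2 b4] := unit_facts _ b0 b1.
  have bR : b \is Num.real by apply: gtr0_real.
  have fb := root_ff _ _ bn0 b2 rb.
  have e := s_unique _ _ _ (sx_real _ bR) (sx_real _ aR) (s_ge2 _ b0) (s_ge2 _ a0) fb fa.
  have /eqP := recip_id _ _ bn0 an0 e; rewrite mulf_eq0 => /orP[/eqP|]; first by move/eqP; rewrite subr_eq0 => /eqP.
  by rewrite subr_eq0 lt_eqF // mulr_ilt1 ?ltW.
have G : forall b : C, 1 < b -> (root (P C k) b <-> b = a^-1).
  move=> b b1; have b0 : 0 < b by apply: lt_trans b1.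
  split=> [rb|->]; last first.
    by apply: root_inv.
  have ib0 : 0 < b^-1 by rewrite invr_gt0.
  have ib1 : b^-1 < 1 by rewrite invf_lt1.
  have [ibn0 ib2 ib4] := unit_facts _ ib0 ib1.
  have rib : root (P C k) b^-1.
    apply: root_inv => //; first by rewrite gt_eqF.
      by move: ib2; rewrite exprVn invr_eq1.
    by move: ib4; rewrite exprVn invr_eq1.
  by rewrite -(U _ _ rib) ?invrK // ib0 ib1.
exists a; split=> //; first by rewrite a0 a1.
move=> beta rb.
have hPv : Pv k beta = 0 by rewrite -P_eval; apply/rootP.
have bn0 : beta != 0 by apply/eqP => e; move: hPv; rewrite e Pv0 => /eqP; rewrite oner_eq0.
have b2 : beta ^+ 2 != 1.
  rewrite sqrf_eq1; apply/negP => /orP[/eqP e|/eqP e]; move: hPv; rewrite e.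
    by move=> h; have := Pv1 k; rewrite h ltxx.
  by move=> h; have := Pv_neg k _ (ltrN10 C); rewrite h ltxx.
have fb := root_ff _ _ bn0 b2 rb.
have sc := s_real _ _ fb.
have bcn0 : beta^* != 0 by rewrite conjC_eq0.
have e : beta + beta^-1 = beta^* + (beta^*)^-1 by rewrite -sc rmorphD fmorphV.
have /eqP := recip_id _ _ bn0 bcn0 e; rewrite mulf_eq0 => /orP[|]; last first.
  rewrite subr_eq0 -normCK sqrf_eq1 => /orP[/eqP|/eqP h]; first by apply: Or33.
  exfalso; have := normr_ge0 beta; rewrite h => H.
  by have := lt_le_trans (ltrN10 C) H; rewrite ltxx.
rewrite subr_eq0 => /eqP bc.
have bR : beta \is Num.real by apply/CrealP.
have bpos : 0 < beta.
  case: (real_ltgtP (real0 _) bR) => [//|bneg|e0]; last by move: bn0; rewrite -e0 eqxx.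
  by exfalso; have := Pv_neg k _ bneg; rewrite hPv ltxx.
have bne1 : beta != 1 by apply: contraNneq b2 => ->; rewrite expr1n.
case: (real_ltgtP bR (real1 _)) => [bl1|bg1|e1]; last by move: bne1; rewrite e1 eqxx.
  by apply: Or31; apply: U; rewrite // bpos bl1.
by apply: Or32; apply/(G _ bg1).
Qed.
End Main.

Theorem mainTheorem4 (C : numClosedFieldType) (k : nat) :
  exists a : C,
    [/\ 0 < a < 1, root (P C k) a,
        (forall b : C, 0 < b < 1 -> root (P C k) b -> b = a),
        (forall b : C, 1 < b -> (root (P C k) b <-> b = a^-1))
      & (forall beta : C, root (P C k) beta ->
           [\/ beta = a, beta = a^-1 | `|beta| = 1])].
Proof. exact: main. Qed.
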